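(* In the setting of the context, assume $\mathbf{A}$ and $\tilde{\mathbf{A}}$ are invertible and $\mathbf{Q}_\Delta$ is given by the LU trick. For $k\in\mathbb{N}$ let $\mathbf{T}_{\mathrm{PFASST}}(\mu,k)=\big(\mathbf{I}_{LMN}-\mathbf{T}_C^F\tilde{\mathbf{P}}^{-1}\mathbf{T}_F^C\mathbf{C}\big)\big(\mathbf{I}_{LMN}-\hat{\mathbf{P}}^{-1}\mathbf{C}\big)^k$ be the iteration matrix of PFASST with $k$ pre-smoothing steps. Then there exist constants $c>0$, $c'\ge0$ and $\mu^*>0$ such that for all $\mu\ge\mu^*$, $$\big\|\mathbf{T}_{\mathrm{PFASST}}(\mu,k)\big\|\le c\,\big\|\mathbf{I}_L\otimes(\mathbf{I}_M-\mathbf{Q}_\Delta^{-1}\mathbf{Q})^k\otimes\mathbf{I}_N\big\|+\frac{c'}{\mu}.$$ In particular, for $k\ge M$ the norm of the iteration matrix tends to zero as $\mu\to\infty$.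
   Context: Fix positive integers $L,M,N$ and coarse sizes $\tilde M\le M$, $\tilde N\le N$. $\mathbf{Q}=(q_{m,j})\in\mathbb{R}^{M\times M}$ with $q_{m,j}=\int_0^{\tau_m}\ell_j(s)\,ds$ is the collocation matrix for the (right) Gauss–Radau nodes $0<\tau_1<\dots<\tau_M=1$ on $[0,1]$. LU trick: $\mathbf{Q}^T=\mathbf{L}_Q\mathbf{U}_Q$ with $\mathbf{L}_Q$ unit lower triangular, $\mathbf{U}_Q$ upper triangular, $\mathbf{Q}_\Delta=\mathbf{U}_Q^T$. $\tilde{\mathbf{Q}}_\Delta\in\mathbb{R}^{\tilde M\times\tilde M}$ is the lower-triangular weight matrix of a simpler quadrature rule on the coarse nodes, assumed invertible (standing assumption of the stiff-limit analysis). $\mathbf{A}\in\mathbb{C}^{N\times N}$, $\tilde{\mathbf{A}}\in\mathbb{C}^{\tilde N\times\tilde N}$, $\mu>0$. $\mathbf{N}_M$, $\tilde{\mathbf{N}}_{\tilde M}$ are the $M\times M$, $\tilde M\times\tilde M$ matrices with ones in the last column and zeros elsewhere; $\mathbf{H}=\mathbf{N}_M\otimes\mathbf{I}_N$, $\tilde{\mathbf{H}}=\tilde{\mathbf{N}}_{\tilde M}\otimes\mathbf{I}_{\tilde N}$; $\mathbf{E}\in\mathbb{R}^{L\times L}$ has ones on the first subdiagonal and zeros elsewhere. $\mathbf{C}=\mathbf{I}_{LMN}-\mu\,\mathbf{I}_L\otimes\mathbf{Q}\otimes\mathbf{A}-\mathbf{E}\otimes\mathbf{H}$, $\hat{\mathbf{P}}=\mathbf{I}_{LMN}-\mu\,\mathbf{I}_L\otimes\mathbf{Q}_\Delta\otimes\mathbf{A}$,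 $\tilde{\mathbf{P}}=\mathbf{I}_{L\tilde M\tilde N}-\mu\,\mathbf{I}_L\otimes\tilde{\mathbf{Q}}_\Delta\otimes\tilde{\mathbf{A}}-\mathbf{E}\otimes\tilde{\mathbf{H}}$ (both invertible). $\mathbf{T}_F^C=\mathbf{I}_L\otimes\mathbf{T}_{F,Q}^C\otimes\mathbf{T}_{F,A}^C\in\mathbb{R}^{L\tilde M\tilde N\times LMN}$, $\mathbf{T}_C^F=\mathbf{I}_L\otimes\mathbf{T}_{C,Q}^F\otimes\mathbf{T}_{C,A}^F\in\mathbb{R}^{LMN\times L\tilde M\tilde N}$, with $(\mathbf{E}\otimes\tilde{\mathbf{H}})\mathbf{T}_F^C=\mathbf{T}_F^C(\mathbf{E}\otimes\mathbf{H})$. $\|\cdot\|$ is any induced matrix norm. *)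

(* Defs.v *)
From HB Require Import structures.
From mathcomp Require Import all_boot all_order all_algebra.
From mathcomp Require Import all_classical all_reals all_analysis.
From mathcomp Require Import complex mxtens.
Set Implicit Arguments. Unset Strict Implicit. Unset Printing Implicit Defensive.
Import Order.TTheory GRing.Theory Num.Theory.
Local Open Scope ring_scope.
Local Open Scope classical_set_scope.

Section PFASST.
Variable R : realType.
Local Notation C := (R[i]).

Definition lagrange (M : nat) (tau : 'I_M -> R) (j : 'I_M) : {poly R} :=
  \prod_(i < M | i != j) (('X - (tau i)%:P) * ((tau j - tau i)^-1)%:P).

Definition pint (p : {poly R}) (t : R) : R :=
  \sum_(i < size p) p`_i * t ^+ i.+1 / (i.+1)%:R.

(* tau_1 < ... < tau_M are the right Gauss-Radau nodes on [0,1]: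
   increasing, in (0,1], tau_M = 1, and the interpolatory quadrature rule
   on them (weights int_0^1 l_j) is exact for all polynomials of degree
   <= 2M-2 (the defining property of Radau quadrature). *)
Definition right_radau_nodes (M : nat) (tau : 'I_M -> R) : Prop :=
  [/\ forall i j : 'I_M, (i < j)%N -> tau i < tau j,
      forall i : 'I_M, 0 < tau i,
      forall i : 'I_M, val i = M.-1 -> tau i = 1
    & forall p : {poly R}, (size p <= (2 * M).-1)%N ->
        pint p 1 = \sum_(j < M) pint (lagrange tau j) 1 * p.[tau j]].

Definition collocQ (M : nat) (tau : 'I_M -> R) : 'M[R]_M :=
  \matrix_(m < M, j < M) pint (lagrange tau j) (tau m).

Definition lower_triangular (n : nat) (A : 'M[R]_n) : Prop :=
  forall i j : 'I_n, (i < j)%N -> A i j = 0.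
Definition upper_triangular (n : nat) (A : 'M[R]_n) : Prop :=
  forall i j : 'I_n, (j < i)%N -> A i j = 0.
Definition unit_lower_triangular (n : nat) (A : 'M[R]_n) : Prop :=
  lower_triangular A /\ forall i, A i i = 1.

Definition LU_trick (M : nat) (Q QD : 'M[R]_M) : Prop :=
  exists LQ UQ : 'M[R]_M,
    [/\ unit_lower_triangular LQ, upper_triangular UQ,
        Q^T = LQ *m UQ & QD = UQ^T].

Definition cmx (m n : nat) (A : 'M[R]_(m, n)) : 'M[C]_(m, n) :=
  map_mx (fun x : R => (x%:C)%C) A.

Definition lastcol (M : nat) : 'M[C]_M :=
  \matrix_(i < M, j < M) (if val j == M.-1 then 1 else 0).

Definition subdiagE (L : nat) : 'M[C]_L :=
  \matrix_(i < L, j < L) (if val i == (val j).+1 then 1 else 0).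

Definition Hmat (M N : nat) : 'M[C]_(M * N) := lastcol M *t (1%:M : 'M[C]_N).

Definition mxpow (n : nat) (A : 'M[C]_n) (k : nat) : 'M[C]_n :=
  iter k (fun B => A *m B) 1%:M.

Definition Cmat (L M N : nat) (Q : 'M[R]_M) (A : 'M[C]_N) (mu : R)
  : 'M[C]_(L * (M * N)) :=
  1%:M - (mu%:C)%C *: ((1%:M : 'M[C]_L) *t (cmx Q *t A))
       - subdiagE L *t Hmat M N.

Definition Phat (L M N : nat) (QD : 'M[R]_M) (A : 'M[C]_N) (mu : R)
  : 'M[C]_(L * (M * N)) :=
  1%:M - (mu%:C)%C *: ((1%:M : 'M[C]_L) *t (cmx QD *t A)).

Definition Ptilde (L Mt Nt : nat) (QtD : 'M[R]_Mt) (At : 'M[C]_Nt) (mu : R)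
  : 'M[C]_(L * (Mt * Nt)) :=
  1%:M - (mu%:C)%C *: ((1%:M : 'M[C]_L) *t (cmx QtD *t At))
       - subdiagE L *t Hmat Mt Nt.

Definition TFC (L M N Mt Nt : nat) (TQ : 'M[R]_(Mt, M)) (TA : 'M[R]_(Nt, N))
  : 'M[C]_(L * (Mt * Nt), L * (M * N)) :=
  (1%:M : 'M[C]_L) *t (cmx TQ *t cmx TA).

Definition TCF (L M N Mt Nt : nat) (TQ : 'M[R]_(M, Mt)) (TA : 'M[R]_(N, Nt))
  : 'M[C]_(L * (M * N), L * (Mt * Nt)) :=
  (1%:M : 'M[C]_L) *t (cmx TQ *t cmx TA).

Definition T_PFASST (L M N Mt Nt : nat) (Q QD : 'M[R]_M) (A : 'M[C]_N)
  (QtD : 'M[R]_Mt) (At : 'M[C]_Nt)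
  (TFCQ : 'M[R]_(Mt, M)) (TFCA : 'M[R]_(Nt, N))
  (TCFQ : 'M[R]_(M, Mt)) (TCFA : 'M[R]_(N, Nt)) (mu : R) (k : nat)
  : 'M[C]_(L * (M * N)) :=
  (1%:M - TCF L TCFQ TCFA *m invmx (Ptilde L QtD At mu)
            *m TFC L TFCQ TFCA *m Cmat L Q A mu)
  *m mxpow (1%:M - invmx (Phat L QD A mu) *m Cmat L Q A mu) k.

Definition cabs (z : C) : R := @complex.Re R `|z|.

Definition vector_norm (n : nat) (nu : 'cV[C]_n -> R) : Prop :=
  [/\ forall x, nu x = 0 -> x = 0,
      forall (a : C) x, nu (a *: x) = cabs a * nu x
    & forall x y, nu (x + y) <= nu x + nu y].

Definition opnorm (n : nat) (nu : 'cV[C]_n -> R) (A : 'M[C]_n) : R :=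
  sup [set nu (A *m x) / nu x | x in [set x : 'cV[C]_n | x != 0]].

End PFASST.

(* Main.v *)
Require Import Defs.
From HB Require Import structures.
From mathcomp Require Import all_boot all_order all_algebra.
From mathcomp Require Import all_classical all_reals all_analysis.
From mathcomp Require Import complex mxtens.
From mathcomp Require Import ring lra zify.
From Stdlib Require Import Lia.
Set Implicit Arguments. Unset Strict Implicit. Unset Printing Implicit Defensive.
Import Order.TTheory GRing.Theory Num.Theory.
Import numFieldNormedType.Exports.
Local Open Scope ring_scope.
Local Open Scope classical_set_scope.


Section Norms.
Variable R : realType.
Local Notation C := (R[i]).

Lemma cabs_real (r : R) : cabs (r%:C)%C = `|r|.
Proof. by rewrite /cabs normc_def /= expr0n /= addr0 sqrtr_sqr. Qed.

End Norms.

Section Basic.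
Variable R : realType.
Local Notation C := (R[i]).
Variable n : nat.
Variable nu : 'cV[C]_n -> R.
Hypothesis hnu : vector_norm nu.

Lemma nuZ (r : R) x : nu ((r%:C)%C *: x) = `|r| * nu x.
Proof. by case: hnu => _ h _; rewrite h cabs_real. Qed.

Lemma nuD x y : nu (x + y) <= nu x + nu y.
Proof. by case: hnu. Qed.

Lemma nu0 : nu 0 = 0.
Proof. by have := nuZ 0 0; rewrite scaler0 normr0 mul0r. Qed.

Lemma nuN x : nu (- x) = nu x.
Proof. by have := nuZ (-1) x; rewrite rmorphN1 scaleN1r normrN1 mul1r. Qed.

Lemma nu_ge0 x : 0 <= nu x.
Proof. by have := nuD x (-x); rewrite subrr nu0 nuN; lra. Qed.

Lemma nu_gt0 x : x != 0 -> 0 < nu x.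
Proof.
move=> hx; rewrite lt_def nu_ge0 andbT; apply/eqP => h.
by case: hnu => h0 _ _; move/eqP: hx; apply; apply: h0.
Qed.

Lemma nu_sum (I : Type) (r : seq I) (P : pred I) (F : I -> 'cV[C]_n) :
  nu (\sum_(i <- r | P i) F i) <= \sum_(i <- r | P i) nu (F i).
Proof.
elim/big_ind2 : _ => [|a b c d h1 h2|i _]; first by rewrite nu0.
  by apply: le_trans (nuD _ _) _; apply: lerD.
by [].
Qed.

End Basic.

Section Psi.
Variable R : realType.
Local Notation C := (R[i]).
Variable n : nat.
Lemma split_l m k (i : 'I_m) : fintype.split (lshift k i) = inl i.
Proof. exact: (unsplitK (inl _ i)). Qed.
Lemma split_r m k (i : 'I_k) : fintype.split (rshift m i) = inr i.
Proof. exact: (unsplitK (inr _ i)). Qed.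

Definition psi (x : 'cV[C]_n) : 'rV[R]_(n + n) :=
  \row_k match fintype.split k with inl i => complex.Re (x i 0)
                                 | inr i => complex.Im (x i 0) end.
Definition phi (y : 'rV[R]_(n + n)) : 'cV[C]_n :=
  \col_i (y 0 (lshift n i) +i* y 0 (rshift n i))%C.

Lemma phi_psi x : phi (psi x) = x.
Proof.
apply/matrixP => i j; rewrite [j]ord1 !mxE split_l split_r.
by case: (x i 0).
Qed.

Lemma psi_phi y : psi (phi y) = y.
Proof.
apply/matrixP => a k; rewrite [a]ord1 !mxE.
case: splitP => j /= hk; rewrite !mxE /=; congr (y _ _); apply: val_inj => //=.
Qed.

Lemma psi0 : psi 0 = 0.
Proof. by apply/matrixP => i k; rewrite !mxE; case: fintype.split => j; rewrite mxE. Qed.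

Lemma phiB y z : phi (y - z) = phi y - phi z.
Proof. by apply/matrixP => i j; rewrite !mxE. Qed.

Lemma phiZ a y : phi (a *: y) = (a%:C)%C *: phi y.
Proof.
apply/matrixP => i j; rewrite !mxE /=; apply/eqP; rewrite eq_complex /=.
by apply/andP; split; apply/eqP; ring.
Qed.

Lemma entry_le m' k (y : 'M[R]_(m', k)) i j : `|y i j| <= `|y|.
Proof.
have -> : `|y| = mx_norm y by [].
rewrite mx_normrE.
exact: (le_bigmax _ (fun ij : 'I_m' * 'I_k => `|y ij.1 ij.2|) (i, j)).
Qed.

End Psi.

Section Upper.
Variable R : realType.
Local Notation C := (R[i]).
Variables p n : nat.
Variable nu : 'cV[C]_p -> R.
Hypothesis hnu : vector_norm nu.

Definition Wc (A : 'M[C]_(p, n)) :=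
  \sum_i (nu (A *m delta_mx i 0) + nu (A *m ('i%C *: delta_mx i 0))).

Lemma Wc_ge0 A : 0 <= Wc A.
Proof. by apply: sumr_ge0 => i _; apply: addr_ge0; apply: (nu_ge0 hnu). Qed.

Lemma nu_upper (A : 'M[C]_(p, n)) x : nu (A *m x) <= `|psi x| * Wc A.
Proof.
have ex : x = \sum_i ((complex.Re (x i 0))%:C%C *: delta_mx i 0
             + (complex.Im (x i 0))%:C%C *: ('i%C *: delta_mx i 0)).
  rewrite {1}(matrix_sum_delta x); apply: eq_bigr => i _.
  rewrite big_ord1 scalerA -scalerDl; congr (_ *: _).
  by rewrite {1}[x i 0]complexE mulrC.
rewrite {1}ex mulmx_sumr /Wc mulr_sumr.
apply: le_trans ((nu_sum hnu _ _ _)) _; apply: ler_sum => i _.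
rewrite mulmxDr -!scalemxAr; apply: le_trans ((nuD hnu _ _)) _.
rewrite !(nuZ hnu) mulrDr; apply: lerD; apply: ler_wpM2r; try exact: (nu_ge0 hnu).
  have -> : complex.Re (x i 0) = psi x 0 (lshift n i) by rewrite mxE split_l.
  exact: entry_le.
have -> : complex.Im (x i 0) = psi x 0 (rshift n i) by rewrite mxE split_r.
exact: entry_le.
Qed.


End Upper.

Section Lower.
Variable R : realType.
Local Notation C := (R[i]).
Variable n : nat.
Variable nu : 'cV[C]_n -> R.
Hypothesis hnu : vector_norm nu.
Hypothesis npos : (0 < n)%N.

Lemma nu_lower : exists2 c0, 0 < c0 & forall x, c0 * `|psi x| <= nu x.
Proof.
pose f := fun y => nu (phi y).
have W0 := Wc_ge0 hnu 1.
have flip : forall y z, `|f y - f z| <= `|y - z| * Wc nu 1.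
  move=> y z.
  have h : nu (phi y - phi z) <= `|y - z| * Wc nu 1.
    by rewrite -phiB; have := nu_upper hnu 1 (phi (y - z)); rewrite mul1mx psi_phi.
  have h' : nu (phi z - phi y) <= `|y - z| * Wc nu 1.
    by rewrite -opprB (nuN hnu).
  have e1 : f y <= f z + nu (phi y - phi z).
    by rewrite /f; have := nuD hnu (phi z) (phi y - phi z); rewrite addrC subrK.
  have e2 : f z <= f y + nu (phi z - phi y).
    by rewrite /f; have := nuD hnu (phi y) (phi z - phi y); rewrite addrC subrK.
  rewrite ler_norml; apply/andP; split; lra.
have fcont : continuous f.
  move=> y; apply/(@cvgrPdist_lt _ _ _ (nbhs y) _) => e e0.
  apply/(@nbhs_normP R [the pseudoMetricNormedZmodType R of 'rV[R]_(n + n)] y); exists (e / (Wc nu 1 + 1)) => /=.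
    by apply: divr_gt0 => //; lra.
  move=> z /= hz; apply: le_lt_trans (flip y z) _.
  have hw : 0 < Wc nu 1 + 1 by lra.
  apply: (@le_lt_trans _ _ (e / (Wc nu 1 + 1) * Wc nu 1)).
    by apply: ler_wpM2r => //; apply: ltW.
  rewrite mulrAC ltr_pdivrMr // ; nra.
pose S := [set y : 'rV[R]_(n + n) | `|y| = 1].
have i0 : 'I_(n + n) by exact: (lshift n (Ordinal npos)).
pose y1 : 'rV[R]_(n + n) := const_mx 1.
have y1n0 : y1 != 0.
  by apply/negP => /eqP /matrixP /(_ 0 i0); rewrite !mxE => /eqP; rewrite oner_eq0.
have S0 : S !=set0.
  exists (`|y1|^-1 *: y1); rewrite /S /= normrZ ger0_norm ?invr_ge0 //.
  by rewrite mulVf // normr_eq0.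
have Sc : compact S.
  apply: bounded_closed_compact.
    exists 1; split => // M hM y /= ->; exact: ltW.
  have -> : S = (Num.norm : 'rV[R]_(n + n) -> R) @^-1` [set x | x = 1] by [].
  apply: preimage_closed.
    by move=> x _; exact: norm_continuous.
  exact: closed_eq.
have [c cS cmin] := EVT_min_rV S0 Sc (fun y => @continuous_subspaceT _ _ _ _ fcont y).
exists (f c).
  rewrite /f (nu_gt0 hnu) //; apply/negP => /eqP hc.
  move: cS; rewrite inE /S /= => hc1.
  have : c = 0 by rewrite -(psi_phi c) hc psi0.
  by move=> c0; move: hc1; rewrite c0 normr0 => /eqP; rewrite eq_sym oner_eq0.
move=> x; case: (eqVneq (psi x) 0) => [->|hx].
  by rewrite normr0 mulr0 (nu_ge0 hnu).
have sp : 0 < `|psi x| by rewrite normr_gt0.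
have := cmin (`|psi x|^-1 *: psi x).
rewrite inE /S /= normrZ normfV normr_id mulVf ?gt_eqF // => /(_ erefl).
rewrite /f phiZ phi_psi (nuZ hnu) ger0_norm ?invr_ge0 ?normr_ge0 //.
by move=> h; rewrite -ler_pdivlMr // mulrC.
Unshelve. all: by end_near.
Qed.

End Lower.

Section Bnd.
Variable R : realType.
Local Notation C := (R[i]).

Definition bnd p q (nup : 'cV[C]_p -> R) (nuq : 'cV[C]_q -> R)
  (A : 'M[C]_(p, q)) (K : R) := forall x, nup (A *m x) <= K * nuq x.

Variables p q r : nat.
Variable nup : 'cV[C]_p -> R.
Variable nuq : 'cV[C]_q -> R.
Variable nur : 'cV[C]_r -> R.
Hypothesis hp : vector_norm nup.
Hypothesis hq : vector_norm nuq.
Hypothesis hr : vector_norm nur.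

Lemma bnd_exists (A : 'M[C]_(p, q)) : (0 < q)%N -> exists2 K, 0 < K & bnd nup nuq A K.
Proof.
move=> qpos; have [c0 c0p hc] := nu_lower hq qpos.
exists (Wc nup A / c0 + 1).
  by apply: ltr_wpDl; [apply: divr_ge0; [apply: Wc_ge0|apply: ltW] | ].
move=> x; apply: le_trans (nu_upper hp A x) _.
have h1 : `|psi x| <= nuq x / c0 by rewrite ler_pdivlMr // mulrC.
have hW := Wc_ge0 hp A; have hn := nu_ge0 hq x.
apply: (@le_trans _ _ (nuq x / c0 * Wc nup A)).
  by apply: ler_wpM2r.
have -> : nuq x / c0 * Wc nup A = Wc nup A / c0 * nuq x by ring.
by rewrite mulrDl mul1r lerDl.
Qed.

Lemma bndM (A : 'M[C]_(p, q)) (B : 'M[C]_(q, r)) a b :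
  0 <= a -> bnd nup nuq A a -> bnd nuq nur B b -> bnd nup nur (A *m B) (a * b).
Proof.
move=> a0 hA hB x; rewrite -mulmxA; apply: le_trans (hA _) _.
by rewrite -mulrA; apply: ler_wpM2l.
Qed.

Lemma bnd_le (A : 'M[C]_(p, q)) a b : a <= b -> bnd nup nuq A a -> bnd nup nuq A b.
Proof.
move=> ab hA x; apply: le_trans (hA x) _; apply: ler_wpM2r => //; exact: nu_ge0.
Qed.

Lemma bndD (A B : 'M[C]_(p, q)) a b :
  bnd nup nuq A a -> bnd nup nuq B b -> bnd nup nuq (A + B) (a + b).
Proof.
move=> hA hB x; rewrite mulmxDl mulrDl; apply: le_trans (nuD hp _ _) _.
exact: lerD.
Qed.

Lemma bndN (A : 'M[C]_(p, q)) a : bnd nup nuq A a -> bnd nup nuq (- A) a.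
Proof. by move=> hA x; rewrite mulNmx nuN. Qed.

Lemma bndB (A B : 'M[C]_(p, q)) a b :
  bnd nup nuq A a -> bnd nup nuq B b -> bnd nup nuq (A - B) (a + b).
Proof. by move=> hA hB; apply: bndD => //; apply: bndN. Qed.

Lemma bndZ (A : 'M[C]_(p, q)) a (c : R) :
  bnd nup nuq A a -> bnd nup nuq ((c%:C)%C *: A) (`|c| * a).
Proof.
move=> hA x; rewrite -scalemxAl nuZ // -mulrA; apply: ler_wpM2l => //.
Qed.

Lemma bnd0 a : 0 <= a -> bnd nup nuq 0 a.
Proof. by move=> a0 x; rewrite mul0mx nu0 // mulr_ge0 // nu_ge0. Qed.

End Bnd.

Lemma bnd1 (R : realType) p (nup : 'cV[R[i]]_p -> R) : bnd nup nup 1%:M 1.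
Proof. by move=> x; rewrite mul1mx mul1r. Qed.

Section Opnorm.
Variable R : realType.
Local Notation C := (R[i]).
Variable n : nat.
Variable nu : 'cV[C]_n -> R.
Hypothesis hnu : vector_norm nu.
Hypothesis npos : (0 < n)%N.

Lemma x1_neq0 : (const_mx 1 : 'cV[C]_n) != 0.
Proof.
apply/negP => /eqP /matrixP /(_ (Ordinal npos) 0); rewrite !mxE => /eqP.
by rewrite oner_eq0.
Qed.

Lemma opnorm_le A K : 0 <= K -> bnd nu nu A K -> opnorm nu A <= K.
Proof.
move=> K0 hA; apply: ge_sup.
  by exists (nu (A *m const_mx 1) / nu (const_mx 1)), (const_mx 1) => //=; exact: x1_neq0.
move=> r [x /= hx <-]; rewrite ler_pdivrMr ?(nu_gt0 hnu) //; exact: hA.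
Qed.

Lemma bnd_opnorm A : bnd nu nu A (opnorm nu A).
Proof.
move=> x; case: (eqVneq x 0) => [->|hx]; first by rewrite mulmx0 (nu0 hnu) mulr0.
have [K K0 hK] := bnd_exists hnu hnu A npos.
have hs : has_sup [set nu (A *m x) / nu x | x in [set x : 'cV[C]_n | x != 0]].
  split.
    by exists (nu (A *m const_mx 1) / nu (const_mx 1)), (const_mx 1) => //=; exact: x1_neq0.
  exists K => r [y /= hy <-]; rewrite ler_pdivrMr ?(nu_gt0 hnu) //; exact: hK.
have := sup_upper_bound hs (ex_intro2 _ _ x hx erefl).
by rewrite ler_pdivrMr ?(nu_gt0 hnu).
Qed.

Lemma opnorm_ge0 A : 0 <= opnorm nu A.
Proof.
have := bnd_opnorm A (const_mx 1); have := nu_ge0 hnu (A *m const_mx 1).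
have := nu_gt0 hnu x1_neq0; set a := nu _; set b := nu _ => ha hb hab.
have : 0 <= opnorm nu A * a by apply: le_trans hb hab.
by rewrite pmulr_lge0.
Qed.

End Opnorm.

Section Cabs.
Variable R : realType.
Local Notation C := (R[i]).

Lemma normcE (z : C) : `|z| = ((cabs z)%:C)%C.
Proof. by rewrite /cabs normc_def. Qed.

Lemma cabs_ge0 (z : C) : 0 <= cabs z.
Proof. by rewrite /cabs normc_def /= sqrtr_ge0. Qed.

Lemma cabsM (a b : C) : cabs (a * b) = cabs a * cabs b.
Proof. by rewrite {1}/cabs normrM !normcE -rmorphM. Qed.

Lemma cabsD (a b : C) : cabs (a + b) <= cabs a + cabs b.
Proof. by have := ler_normD a b; rewrite !normcE -rmorphD lecR. Qed.

Lemma cabs_eq0 (a : C) : cabs a = 0 -> a = 0.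
Proof. by move=> h; apply/eqP; rewrite -normr_eq0 normcE h. Qed.

Definition nu1 n (z : 'cV[C]_n) : R := \sum_i cabs (z i 0).

Lemma nu1_norm n : vector_norm (@nu1 n).
Proof.
split.
- move=> z h; apply/matrixP => i j; rewrite [j]ord1 mxE; apply: cabs_eq0.
  move/eqP: h; rewrite /nu1 psumr_eq0 => [/allP h|i' _]; last exact: cabs_ge0.
  by apply/eqP; apply: h; rewrite mem_index_enum.
- move=> a z; rewrite /nu1 mulr_sumr; apply: eq_bigr => i _; rewrite mxE cabsM //.
- move=> x y; rewrite /nu1 -big_split /=; apply: ler_sum => i _; rewrite mxE.
  exact: cabsD.
Qed.

End Cabs.


Section Radau.
Variable R : realType.
Variable M : nat.
Variable tau : 'I_M -> R.
Hypothesis hinc : forall i j : 'I_M, (i < j)%N -> tau i < tau j.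
Hypothesis hpos : forall i, 0 < tau i.

Lemma tau_inj : injective tau.
Proof.
move=> i j h; case: (ltngtP i j) => [hij|hij|hij].
- by move: (hinc hij); rewrite h ltxx.
- by move: (hinc hij); rewrite h ltxx.
- exact: val_inj.
Qed.

Lemma lagr_eval (j m : 'I_M) : horner (Defs.lagrange tau j) (tau m) = (j == m)%:R.
Proof.
rewrite /Defs.lagrange horner_prod.
case: (eqVneq j m) => [<-|hjm].
  apply: big1 => i hi.
  rewrite hornerM hornerXsubC hornerC mulfV // subr_eq0; apply/eqP => /tau_inj h.
  by move: hi; rewrite h eqxx.
rewrite (bigD1 m) /=; last by rewrite eq_sym.
by rewrite hornerM hornerXsubC subrr !mul0r.
Qed.

Lemma size_lagr j : (size (Defs.lagrange tau j) <= M)%N.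
Proof.
rewrite /Defs.lagrange size_prod; last first.
  move=> i hi; rewrite mulf_neq0 // ?polyXsubC_eq0 // polyC_eq0 invr_eq0 subr_eq0.
  by apply/eqP => /tau_inj h; move: hi; rewrite h eqxx.
rewrite (eq_bigr (fun _ => 2%N)); last first.
  move=> i hi; rewrite size_mul ?polyXsubC_eq0 ?size_XsubC ?size_polyC //.
    rewrite invr_eq0 subr_eq0; have -> // : tau j != tau i.
    by apply/eqP => /tau_inj h; move: hi; rewrite h eqxx.
  rewrite polyC_eq0 invr_eq0 subr_eq0.
  by apply/eqP => /tau_inj h; move: hi; rewrite h eqxx.
rewrite sum_nat_const.
have -> : #|[pred i : 'I_M | i != j]| = M.-1.
  by have := cardC1 j; rewrite card_ord.
case: M j => [[]//|m] j /=; lia.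
Qed.

Definition antider (n : nat) (p : {poly R}) : {poly R} :=
  \poly_(i < n.+1) (if i is k.+1 then p`_k / k.+1%:R else 0).

Lemma pint_antider n (p : {poly R}) (t : R) : (size p <= n)%N -> pint p t = horner (antider n p) t.
Proof.
move=> hs; rewrite horner_poly big_ord_recl /= mul0r add0r /pint.
rewrite (big_ord_widen n (fun i => p`_i * t ^+ i.+1 / i.+1%:R) hs) big_mkcond /=.
apply: eq_bigr => i _; rewrite /bump leq0n add1n add0n.
case: ifP => hi; first by rewrite mulrAC.
by rewrite nth_default ?mul0r // leqNgt hi.
Qed.

Lemma antider_coef n (p : {poly R}) i : (antider n p)`_i.+1 = if (i < n)%N then p`_i / i.+1%:R else 0.
Proof. by rewrite coef_poly ltnS. Qed.

Lemma antider_at0 n (p : {poly R}) : horner (antider n p) 0 = 0.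
Proof. by rewrite horner_coef0 coef_poly. Qed.

Lemma antider_sum n (v : 'I_M -> R) (F : 'I_M -> {poly R}) :
  antider n (\sum_j v j *: F j) = \sum_j v j *: antider n (F j).
Proof.
apply/polyP => k; rewrite [RHS]coef_sum coef_poly.
under [RHS]eq_bigr do rewrite coefZ coef_poly.
case: ifP => hk; last by rewrite big1 // => j _; rewrite mulr0.
case: k hk => [|k] hk; first by rewrite big1 // => j _; rewrite mulr0.
by rewrite coef_sum mulr_suml; apply: eq_bigr => j _; rewrite coefZ mulrA.
Qed.

Lemma Q_unit : collocQ tau \in unitmx.
Proof.
rewrite -unitmx_tr -row_free_unit; apply/inj_row_free => v hv.
have hm : forall m, \sum_j v 0 j * pint (Defs.lagrange tau j) (tau m) = 0.
  move=> m; have := congr1 (fun A : 'M[R]_(1, M) => A 0 m) hv; rewrite !mxE => h; rewrite -[RHS]h.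
  by apply: eq_bigr => j _; rewrite !mxE.
pose p := \sum_j v 0 j *: Defs.lagrange tau j.
have sp : (size p <= M)%N.
  rewrite /p; elim/big_ind: _ => [|a b ha hb|j _]; first by rewrite size_poly0.
    by apply: leq_trans (size_polyD _ _) _; rewrite geq_max ha hb.
  by apply: leq_trans (size_scale_leq _ _) _; apply: size_lagr.
pose P := antider M p.
have hP : forall m, horner P (tau m) = 0.
  move=> m; rewrite /P /p antider_sum horner_sum -[RHS](hm m); apply: eq_bigr => j _.
  by rewrite hornerZ -pint_antider // size_lagr.
have P0 : horner P 0 = 0 by rewrite antider_at0.
have sP : (size P <= M.+1)%N by exact: size_poly.
have Pz : P = 0.
  apply/eqP; apply/negPn/negP => hP0.
  have := @max_poly_roots _ P (0 :: [seq tau m | m <- enum 'I_M]) hP0.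
  rewrite /= size_map size_enum_ord.
  have -> : root P 0 by apply/rootP.
  have -> : all (root P) [seq tau m | m <- enum 'I_M].
    by apply/allP => x /mapP [m _ ->]; apply/rootP.
  have -> : 0 \notin [seq tau m | m <- enum 'I_M].
    by apply/negP => /mapP [m _ h]; move: (hpos m); rewrite -h ltxx.
  rewrite map_inj_uniq ?enum_uniq //; last exact: tau_inj.
  move=> /(_ erefl erefl); rewrite ltnNge sP //.
have pz : p = 0.
  apply/polyP => k; rewrite coef0; case: (ltnP k M) => hk.
    have := congr1 (fun q : {poly R} => q`_k.+1) Pz; rewrite /P antider_coef hk coef0 => /eqP.
    by rewrite mulf_eq0 invr_eq0 pnatr_eq0 orbF => /eqP.
  by rewrite nth_default // (leq_trans sp hk).
apply/rowP => m; rewrite mxE.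
have := congr1 (fun q : {poly R} => horner q (tau m)) pz; rewrite /p horner_sum horner0 => <-.
rewrite (bigD1 m) //= hornerZ lagr_eval eqxx mulr1 big1 ?addr0 // => j hj.
by rewrite hornerZ lagr_eval (negbTE hj) mulr0.
Qed.

End Radau.


Lemma zid_S (V : zmodType) (P Cm W PX X E a : V) :
  Cm = P - W -> W = - a + E -> PX = X - a -> P - Cm - PX = E - X.
Proof.
move=> -> -> ->; rewrite opprB [P + _]addrC subrK opprB addrC addrA.
by rewrite [a - X - a]addrAC subrr add0r addrC.
Qed.

Lemma zidC (V : zmodType) (o g q e : V) : o - q - e = (o - g) - ((q - g) + e).
Proof. by rewrite opprD opprB !addrA subrK. Qed.

Section Gen.
Variable R : realType.
Local Notation C := (R[i]).

Lemma tens11 m k : (1%:M : 'M[C]_m) *t (1%:M : 'M[C]_k) = 1%:M.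
Proof.
apply/matrixP => a b.
case: (mxtens_indexP a) => a1 a2; case: (mxtens_indexP b) => b1 b2.
rewrite tensmxE !mxE -natrM mulnb (can_eq (@mxtens_indexK _ _)) xpair_eqE //.
Qed.

Lemma tensmxBl m1 n1 m2 n2 (A B : 'M[C]_(m1, n1)) (D : 'M[C]_(m2, n2)) :
  (A - B) *t D = A *t D - B *t D.
Proof. by apply/matrixP => a b; rewrite !mxE mulrBl. Qed.

Lemma tensmxBr m1 n1 m2 n2 (A : 'M[C]_(m1, n1)) (B D : 'M[C]_(m2, n2)) :
  A *t (B - D) = A *t B - A *t D.
Proof. by apply/matrixP => a b; rewrite !mxE mulrBr. Qed.

Lemma mxpowS n (A : 'M[C]_n) k : mxpow A k.+1 = A *m mxpow A k.
Proof. by []. Qed.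

Lemma mxpow_tens L M N (Y : 'M[C]_M) k :
  mxpow ((1%:M : 'M[C]_L) *t (Y *t (1%:M : 'M[C]_N))) k
  = (1%:M : 'M[C]_L) *t (mxpow Y k *t (1%:M : 'M[C]_N)).
Proof.
elim: k => [|k IH]; first by rewrite /mxpow /= !tens11.
by rewrite !mxpowS IH !tensmx_mul !mul1mx.
Qed.

Lemma mx_nilp n (Y : 'M[C]_n) : (forall i j : 'I_n, (j <= i)%N -> Y i j = 0) ->
  forall k (i j : 'I_n), (j < i + k)%N -> mxpow Y k i j = 0.
Proof.
move=> hY; elim=> [|k IH] i j hij.
  by rewrite /mxpow /= mxE; case: eqP => // h; move: hij; rewrite h addn0 ltnn.
rewrite mxpowS mxE big1 // => l _.
case: (leqP l i) => hl; first by rewrite hY // mul0r.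
by rewrite IH ?mulr0 //; lia.
Qed.

Lemma inv_bnd p (nup : 'cV[C]_p -> R) (hp : vector_norm nup)
  (P G B : 'M[C]_p) (mu Kg Kb : R) :
  P \in unitmx -> P = B - (mu%:C)%C *: G ->
  (forall x, nup x <= Kg * nup (G *m x)) -> bnd nup nup B Kb ->
  0 < mu -> 0 <= Kg -> 0 <= Kb -> 2 * Kg * Kb <= mu ->
  bnd nup nup (invmx P) (2 * Kg / mu).
Proof.
move=> hP hPe hG hB mu0 Kg0 Kb0 hmu y.
set x := invmx P *m y.
have hx : P *m x = y by rewrite /x mulmxA mulmxV // mul1mx.
have e : (mu%:C)%C *: (G *m x) = B *m x - y.
  by rewrite -hx hPe mulmxBl opprB addrC subrK scalemxAl.
have h1 := hG x.
have h2 : mu * nup (G *m x) <= Kb * nup x + nup y.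
  have := nuZ hp mu (G *m x); rewrite e gtr0_norm // => <-.
  apply: le_trans (nuD hp _ _) _; rewrite nuN //; apply: lerD => //.
have ha := nu_ge0 hp x; have hb := nu_ge0 hp y; have hg := nu_ge0 hp (G *m x).
rewrite mulrAC ler_pdivlMr //.
have : mu * nup x <= Kg * (Kb * nup x + nup y).
  apply: le_trans (_ : mu * (Kg * nup (G *m x)) <= _).
    by apply: ler_wpM2l => //; apply: ltW.
  by rewrite mulrCA; apply: ler_wpM2l.
nra.
Qed.

Lemma pow_pert n (nu : 'cV[C]_n -> R) (hnu : vector_norm nu) (npos : (0 < n)%N)
  (X : 'M[C]_n) (d : R) : 0 <= d -> forall k, exists2 dk, 0 <= dk &
  forall (mu : R) (S : 'M[C]_n), 1 <= mu -> bnd nu nu (S - X) (d / mu) ->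
     bnd nu nu (mxpow S k - mxpow X k) (dk / mu).
Proof.
move=> d0; elim=> [|k [dk dk0 IH]].
  exists 0 => // mu S _ _; rewrite subrr mul0r; exact: (bnd0 hnu hnu).
have [Kx Kx0 hX] := bnd_exists hnu hnu X npos.
have [Kk Kk0 hXk] := bnd_exists hnu hnu (mxpow X k) npos.
exists (d * dk + d * Kk + Kx * dk).
  by apply: addr_ge0; [apply: addr_ge0|]; apply: mulr_ge0 => //; apply: ltW.
move=> mu S mu1 hS.
have mu0 : 0 < mu by lra.
have hSk := IH mu S mu1 hS.
set D := S - X; set Dk := mxpow S k - mxpow X k.
have eS : S = D + X by rewrite /D subrK.
have eSk : mxpow S k = Dk + mxpow X k by rewrite /Dk subrK.
have -> : mxpow S k.+1 - mxpow X k.+1 = D *m Dk + D *m mxpow X k + X *m Dk.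
  rewrite !mxpowS eSk {1}eS mulmxDl !mulmxDr !addrA addrK //.
have hd : 0 <= d / mu by apply: divr_ge0 => //; apply: ltW.
apply: (bnd_le hnu); last first.
  apply: (bndD hnu); first apply: (bndD hnu).
  - exact: bndM hd hS hSk.
  - exact: bndM hd hS hXk.
  - by apply: bndM (ltW Kx0) hX hSk.
rewrite !mulrDl; apply: lerD; first apply: lerD.
- have -> : d / mu * (dk / mu) = d * dk / mu * mu^-1 by rewrite !mulrA [d / mu * dk]mulrAC.
  apply: ler_piMr; first by apply: divr_ge0; [apply: mulr_ge0|apply: ltW].
  by rewrite invf_le1.
- by rewrite mulrAC lexx.
- by rewrite mulrA lexx.
Qed.

End Gen.


Section Cmx.
Variable R : realType.
Lemma cmxM m n p (A : 'M[R]_(m, n)) (B : 'M[R]_(n, p)) : cmx (A *m B) = cmx A *m cmx B.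
Proof.
apply/matrixP => i j; rewrite !mxE rmorph_sum; apply: eq_bigr => k _.
by rewrite !mxE rmorphM.
Qed.
Lemma cmx1 n : cmx (1%:M : 'M[R]_n) = 1%:M.
Proof. by apply/matrixP => i j; rewrite !mxE; case: eqP. Qed.
End Cmx.

Section Main.
Variable R : realType.
Local Notation C := (R[i]).
Variables (L M N Mt Nt : nat) (tau : 'I_M -> R) (QD : 'M[R]_M) (QtD : 'M[R]_Mt)
  (A : 'M[C]_N) (At : 'M[C]_Nt)
  (TFCQ : 'M[R]_(Mt, M)) (TFCA : 'M[R]_(Nt, N))
  (TCFQ : 'M[R]_(M, Mt)) (TCFA : 'M[R]_(N, Nt)).
Hypotheses (hL : (0 < L)%N) (hM : (0 < M)%N) (hN : (0 < N)%N)
  (hMt : (0 < Mt)%N) (hNt : (0 < Nt)%N).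
Hypotheses (hQD : QD \in unitmx) (hQtD : QtD \in unitmx)
  (hA : A \in unitmx) (hAt : At \in unitmx).
Hypothesis hinv : forall mu : R, 0 < mu ->
  Phat L QD A mu \in unitmx /\ Ptilde L QtD At mu \in unitmx.
Variable nu : 'cV[C]_(L * (M * N)) -> R.
Hypothesis hnu : vector_norm nu.

Let Q := collocQ tau.
Let G := (1%:M : 'M[C]_L) *t (cmx QD *t A).
Let Gi := (1%:M : 'M[C]_L) *t (cmx (invmx QD) *t invmx A).
Let Gq := (1%:M : 'M[C]_L) *t (cmx Q *t A).
Let EH := subdiagE R L *t Hmat R M N.
Let Y := (1%:M : 'M[C]_M) - cmx (invmx QD *m Q).
Let X1 := (1%:M : 'M[C]_L) *t (Y *t (1%:M : 'M[C]_N)).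
Let Gt := (1%:M : 'M[C]_L) *t (cmx QtD *t At).
Let Gti := (1%:M : 'M[C]_L) *t (cmx (invmx QtD) *t invmx At).
Let EHt := subdiagE R L *t Hmat R Mt Nt.

Lemma npos : (0 < L * (M * N))%N.
Proof. by rewrite !muln_gt0 hL hM hN. Qed.
Lemma ntpos : (0 < L * (Mt * Nt))%N.
Proof. by rewrite !muln_gt0 hL hMt hNt. Qed.

Lemma Gi_G : Gi *m G = 1%:M.
Proof.
by rewrite /Gi /G !tensmx_mul -cmxM !mulVmx // cmx1 mul1mx !tens11.
Qed.

Lemma Gti_Gt : Gti *m Gt = 1%:M.
Proof.
by rewrite /Gti /Gt !tensmx_mul -cmxM !mulVmx // cmx1 mul1mx !tens11.
Qed.

Lemma GX1 : G *m X1 = G - Gq.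
Proof.
rewrite /G /X1 /Gq /Y !tensmx_mul mul1mx mulmx1 mulmxBr mulmx1 -cmxM mulmxA.
by rewrite mulmxV // mul1mx tensmxBl tensmxBr.
Qed.

Lemma S_decomp mu : Phat L QD A mu \in unitmx ->
  1%:M - invmx (Phat L QD A mu) *m Cmat L Q A mu
  = X1 + invmx (Phat L QD A mu) *m (EH - X1).
Proof.
move=> hP; set P := Phat L QD A mu.
have eP : P = 1%:M - (mu%:C)%C *: G by [].
set W := (mu%:C)%C *: (Gq - G) + EH.
have eC : Cmat L Q A mu = P - W.
  rewrite eP /W /Cmat scalerBr -/Gq -/EH; exact: zidC.
have hPS : P *m (1%:M - invmx P *m Cmat L Q A mu - X1) = EH - X1.
  rewrite 2!mulmxBr mulmx1 mulmxA mulmxV // mul1mx.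
  have hW : W = - ((mu%:C)%C *: (G - Gq)) + EH by rewrite /W -scalerN opprB.
  have hX : P *m X1 = X1 - (mu%:C)%C *: (G - Gq).
    by rewrite eP mulmxBl mul1mx -scalemxAl GX1.
  exact: (zid_S eC hW hX).
rewrite [RHS]addrC; apply/eqP; rewrite -subr_eq; apply/eqP.
by rewrite -hPS mulKmx.
Qed.


Lemma main_bound k : exists (KB dk mustar : R), [/\ 0 < KB, 0 <= dk, 0 < mustar &
  forall mu, mustar <= mu -> forall x,
    nu (T_PFASST L Q QD A QtD At TFCQ TFCA TCFQ TCFA mu k *m x)
    <= KB * nu (mxpow X1 k *m x) + KB * dk / mu * nu x].
Proof.
have np := npos; have ntp := ntpos.
have h1 := @nu1_norm R (L * (Mt * Nt)).
set nu1t := @nu1 R (L * (Mt * Nt)).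
have [Kgi Kgi0 hGi] := bnd_exists hnu hnu Gi np.
have hG : forall x, nu x <= Kgi * nu (G *m x).
  by move=> x; have := hGi (G *m x); rewrite mulmxA Gi_G mul1mx.
have [Kz Kz0 hZ] := bnd_exists hnu hnu (EH - X1) np.
set d := 2 * Kgi * Kz.
have d0 : 0 <= d by rewrite /d; apply: mulr_ge0; [apply: mulr_ge0|]; lra.
have [dk dk0 hpow] := pow_pert hnu np X1 d0 k.
have [Kgti Kgti0 hGti] := bnd_exists h1 h1 Gti ntp.
have hGt : forall x, nu1t x <= Kgti * nu1t (Gt *m x).
  by move=> x; have := hGti (Gt *m x); rewrite mulmxA Gti_Gt mul1mx.
have [Kbt Kbt0 hBt] := bnd_exists h1 h1 (1%:M - EHt) ntp.
have [Ktcf Ktcf0 hTCF] := bnd_exists hnu h1 (TCF L TCFQ TCFA) ntp.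
have [Ktfc Ktfc0 hTFC] := bnd_exists h1 hnu (TFC L TFCQ TFCA) np.
have [Kgq Kgq0 hGq] := bnd_exists hnu hnu Gq np.
have [Keh Keh0 hEH] := bnd_exists hnu hnu EH np.
set K2 := Ktcf * (2 * Kgti) * Ktfc * (1 + Kgq + Keh).
have K20 : 0 <= K2.
  by rewrite /K2; repeat apply: mulr_ge0; lra.
exists (1 + K2), dk, (1 + 2 * Kgi + 2 * Kgti * Kbt).
have hKK : 0 <= Kgti * Kbt by apply: mulr_ge0; lra.
split => //; [lra | lra |].
move=> mu hmu x.
have mu1 : 1 <= mu by lra.
have mu0 : 0 < mu by lra.
have [hPh hPt] := hinv mu0.
have hiP : bnd nu nu (invmx (Phat L QD A mu)) (2 * Kgi / mu).
  apply: (inv_bnd hnu hPh (B := 1%:M) (G := G) (Kb := 1)) => //.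
  - exact: bnd1.
  - exact: ltW.
  - lra.
have hSX : bnd nu nu ((1%:M - invmx (Phat L QD A mu) *m Cmat L Q A mu) - X1) (d / mu).
  rewrite S_decomp // [X1 + _]addrC addrK.
  apply: (bnd_le hnu) (bndM _ hiP hZ).
    by rewrite /d mulrAC lexx.
  by apply: divr_ge0; lra.
have hSk := hpow mu _ mu1 hSX.
have hiPt : bnd nu1t nu1t (invmx (Ptilde L QtD At mu)) (2 * Kgti / mu).
  apply: (inv_bnd h1 hPt (B := 1%:M - EHt) (G := Gt) (Kb := Kbt)) => //.
  - by rewrite /Ptilde addrAC.
  - exact: ltW.
  - exact: ltW.
  - lra.
have hC : bnd nu nu (Cmat L Q A mu) (1 + `|mu| * Kgq + Keh).
  rewrite /Cmat -/Gq -/EH.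
  apply: (bndB hnu) => //; apply: (bndB hnu); [exact: bnd1 | exact: bndZ].
have hX0 : bnd nu nu (TCF L TCFQ TCFA *m invmx (Ptilde L QtD At mu)
    *m TFC L TFCQ TFCA *m Cmat L Q A mu)
    (Ktcf * (2 * Kgti / mu) * Ktfc * (1 + `|mu| * Kgq + Keh)).
  have e1 : 0 <= Ktcf by lra.
  have e2 : 0 <= 2 * Kgti / mu by apply: divr_ge0; lra.
  have e3 : 0 <= Ktfc by lra.
  apply: bndM hC; first by apply: mulr_ge0 => //; apply: mulr_ge0.
  apply: bndM hTFC; first by apply: mulr_ge0.
  exact: bndM hTCF hiPt.
have hTB : bnd nu nu (1%:M - TCF L TCFQ TCFA *m invmx (Ptilde L QtD At mu)
    *m TFC L TFCQ TFCA *m Cmat L Q A mu) (1 + K2).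
  apply: (bndB hnu); first exact: bnd1.
  apply: (bnd_le hnu) hX0.
  rewrite ger0_norm; last lra.
  set a := Ktcf * (2 * Kgti) * Ktfc.
  have a0 : 0 <= a by rewrite /a; repeat apply: mulr_ge0; lra.
  have -> : Ktcf * (2 * Kgti / mu) * Ktfc * (1 + mu * Kgq + Keh)
      = a * (1 + mu * Kgq + Keh) / mu.
    by rewrite /a; field; lra.
  rewrite ler_pdivrMr // /K2 -/a.
  have h : 0 <= a * ((1 + Keh) * (mu - 1)).
    by apply: mulr_ge0 => //; apply: mulr_ge0; lra.
  nra.
have -> : T_PFASST L Q QD A QtD At TFCQ TFCA TCFQ TCFA mu k
  = (1%:M - TCF L TCFQ TCFA *m invmx (Ptilde L QtD At mu)
    *m TFC L TFCQ TFCA *m Cmat L Q A mu)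
    *m mxpow (1%:M - invmx (Phat L QD A mu) *m Cmat L Q A mu) k by [].
set Sk := mxpow _ k.
have := hTB (Sk *m x); rewrite mulmxA => hh; apply: le_trans hh _.
have -> : Sk *m x = mxpow X1 k *m x + (Sk - mxpow X1 k) *m x.
  by rewrite mulmxBl [RHS]addrC subrK.
have hn := nu_ge0 hnu x.
apply: le_trans (_ : (1 + K2) * (nu (mxpow X1 k *m x) + dk / mu * nu x) <= _).
  apply: ler_wpM2l; first lra.
  apply: le_trans (nuD hnu _ _) _; apply: lerD => //; exact: hSk.
by rewrite mulrDr !mulrA lexx.
Qed.

End Main.


Lemma Y_zero (R : realType) M (tau : 'I_M -> R) (QD : 'M[R]_M) k :
  LU_trick (collocQ tau) QD -> QD \in unitmx -> (M <= k)%N ->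
  mxpow (1%:M - cmx (invmx QD *m collocQ tau)) k = 0.
Proof.
case=> LQ [UQ [[hlow hdiag] hup hQ hQD]] hu hk.
have eQ : collocQ tau = QD *m LQ^T by rewrite hQD -trmx_mul -hQ trmxK.
rewrite [X in invmx QD *m X]eQ mulKmx //.
have hY : forall a b : 'I_M, (b <= a)%N -> (1%:M - cmx LQ^T) a b = 0 :> R[i].
  move=> a b hab; rewrite !mxE.
  case: (ltngtP b a) hab => // [hba|hba] _.
    rewrite hlow // rmorph0 subr0; case: eqP => // h.
    by move: hba; rewrite h ltnn.
  have -> : b = a by apply: val_inj.
  by rewrite hdiag eqxx /= subrr.
apply/matrixP => i j; rewrite [RHS]mxE; apply: (mx_nilp hY).
by have := ltn_ord j; lia.
Qed.

Theorem theorem4 (R : realType) (L M N Mt Nt : nat)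
  (tau : 'I_M -> R) (QD : 'M[R]_M) (QtD : 'M[R]_Mt)
  (A : 'M[R[i]]_N) (At : 'M[R[i]]_Nt)
  (TFCQ : 'M[R]_(Mt, M)) (TFCA : 'M[R]_(Nt, N))
  (TCFQ : 'M[R]_(M, Mt)) (TCFA : 'M[R]_(N, Nt)) :
  (0 < L)%N -> (0 < M)%N -> (0 < N)%N ->
  (0 < Mt)%N -> (Mt <= M)%N -> (0 < Nt)%N -> (Nt <= N)%N ->
  right_radau_nodes tau ->
  LU_trick (collocQ tau) QD ->
  lower_triangular QtD -> QtD \in unitmx ->
  A \in unitmx -> At \in unitmx ->
  (subdiagE R L *t Hmat R Mt Nt) *m TFC L TFCQ TFCA
    = TFC L TFCQ TFCA *m (subdiagE R L *t Hmat R M N) ->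
  (forall mu : R, 0 < mu ->
     Phat L QD A mu \in unitmx /\ Ptilde L QtD At mu \in unitmx) ->
  forall (k : nat) (nu : 'cV[R[i]]_(L * (M * N)) -> R),
  vector_norm nu ->
  (exists (c c' mustar : R),
     [/\ 0 < c, 0 <= c', 0 < mustar &
      forall mu : R, mustar <= mu ->
        opnorm nu (T_PFASST L (collocQ tau) QD A QtD At
                              TFCQ TFCA TCFQ TCFA mu k)
        <= c * opnorm nu ((1%:M : 'M[R[i]]_L) *t
               (mxpow (1%:M - cmx (invmx QD *m collocQ tau)) k
                *t (1%:M : 'M[R[i]]_N)))
           + c' / mu])
  /\ ((M <= k)%N ->
      opnorm nu (T_PFASST L (collocQ tau) QD A QtD At
                          TFCQ TFCA TCFQ TCFA mu k) @[mu --> +oo] --> 0).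
Proof.
move=> hL hM hN hMt hMtM hNt hNtN hrad hLU hlow hQtD hA hAt hcomm hinv k nu hnu.
case: hrad => hinc hpos _ _.
have hQu := Q_unit hinc hpos.
have hQD : QD \in unitmx.
  case: (hLU) => LQ [UQ [_ _ hQ ->]]; rewrite unitmx_tr.
  have : (collocQ tau)^T \in unitmx by rewrite unitmx_tr.
  by rewrite hQ unitmx_mul => /andP[].
have np : (0 < L * (M * N))%N by rewrite !muln_gt0 hL hM hN.
have [KB [dk [ms [KB0 dk0 ms0 hb]]]] :=
  main_bound tau TFCQ TFCA TCFQ TCFA hL hM hN hMt hNt hQD hQtD hA hAt hinv hnu k.
rewrite -mxpow_tens.
split.
  exists KB, (KB * dk), ms; split => //.
    by apply: mulr_ge0 => //; apply: ltW.
  move=> mu hmu; apply: (opnorm_le hnu np).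
    apply: addr_ge0; first by apply: mulr_ge0; [apply: ltW|apply: opnorm_ge0].
    by apply: divr_ge0; [apply: mulr_ge0; [apply: ltW|]|]; lra.
  move=> x; apply: le_trans (hb mu hmu x) _.
  rewrite mulrDl; apply: lerD; last by rewrite lexx.
  rewrite -mulrA; apply: ler_wpM2l; first exact: ltW.
  exact: bnd_opnorm.
move=> hk.
rewrite mxpow_tens (Y_zero hLU hQD hk) tens0mx tensmx0 in hb.
have hb' : forall mu, ms <= mu ->
    opnorm nu (T_PFASST L (collocQ tau) QD A QtD At TFCQ TFCA TCFQ TCFA mu k)
    <= KB * dk / mu.
  move=> mu hmu; apply: (opnorm_le hnu np).
    by apply: divr_ge0; [apply: mulr_ge0; [apply: ltW|]|]; lra.
  by move=> x; have := hb mu hmu x; rewrite mul0mx (nu0 hnu) mulr0 add0r.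
apply/cvgrPdist_lt => e e0; near=> mu.
rewrite sub0r normrN ger0_norm; last exact: opnorm_ge0.
have hm1 : ms <= mu by near: mu; apply: nbhs_pinfty_ge; exact: num_real.
have hm2 : (KB * dk + 1) / e < mu by near: mu; apply: nbhs_pinfty_gt; exact: num_real.
apply: le_lt_trans (hb' mu hm1) _.
have mu0 : 0 < mu by lra.
rewrite ltr_pdivrMr //.
move: hm2; rewrite ltr_pdivrMr // => hm2.
nra.
Unshelve. all: by end_near.
Qed.
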